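(* For every integer $n\ge 2$ and every real $x>0$, $$\bigl(\psi_2^{(n)}(x+1)\bigr)^2\le \psi_2^{(n)}(x)\,\psi_2^{(n)}(x+2).$$
   Context: For an integer $n\ge 2$ and $x>0$, the poly-double gamma function is defined by $$\psi_2^{(n)}(x)=(-1)^{n+1}\,n!\sum_{k=0}^{\infty}\frac{1+k}{(x+k)^{n+1}} .$$ *)

(* Defs.v *)
From Stdlib Require Import Reals.
From Coquelicot Require Import Coquelicot.
Open Scope R_scope.

(* For n >= 2 and x > 0 the series converges (terms ~ k^{-n}), so
   Coquelicot's total [Series] is its actual sum. *)
Definition psi2 (n : nat) (x : R) : R :=
  (-1) ^ (n + 1) * INR (Factorial.fact n) *
  Series (fun k : nat => (1 + INR k) / (x + INR k) ^ (n + 1)).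

(* Main.v *)
Require Import Defs.
From Stdlib Require Import Reals Lra Lia.
From Coquelicot Require Import Coquelicot.
Open Scope R_scope.

Definition tele (k : nat) : R := / (INR k + 1) - / (INR k + 2).

Lemma tele_sum n : sum_n tele n = 1 - / (INR n + 2).
Proof.
  induction n as [|n IH].
  - rewrite sum_O. unfold tele. simpl. field.
  - rewrite sum_Sn, IH. unfold tele, plus; simpl.
    change (1 - / (INR n + 2) + (/ (INR (S n) + 1) - / (INR (S n) + 2)) = 1 - / (INR (S n) + 2)). rewrite S_INR.
    assert (0 <= INR n) by apply pos_INR. field; lra.
Qed.

Lemma ex_tele : ex_series tele.
Proof.
  exists 1.
  assert (H : is_lim_seq (fun n => 1 - / (INR n + 2)) 1).
  { replace 1 with (1 - 0) at 2 by ring.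
    apply (is_lim_seq_minus _ _ 1 0).
    - apply is_lim_seq_const.
    - replace (Finite 0) with (Rbar_inv p_infty) by reflexivity.
      apply is_lim_seq_inv; [|discriminate].
      eapply is_lim_seq_plus; [apply is_lim_seq_INR|apply is_lim_seq_const|].
      reflexivity.
    - unfold is_Rbar_minus, is_Rbar_plus; simpl. f_equal. f_equal. ring. }
  unfold is_series.
  eapply (is_lim_seq_ext _ _ 1) in H.
  exact H.
  intro n; now rewrite tele_sum.
Qed.

Lemma term_pos y m k : 0 < y -> 0 < (1 + INR k) / (y + INR k) ^ m.
Proof.
  intros Hy. assert (0 <= INR k) by apply pos_INR.
  apply Rdiv_lt_0_compat; [lra|]. apply pow_lt; lra.
Qed.

Lemma ex_S y m : 0 < y -> (3 <= m)%nat ->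
  ex_series (fun k => (1 + INR k) / (y + INR k) ^ m).
Proof.
  intros Hy Hm. apply ex_series_incr_1.
  apply (@ex_series_le R_AbsRing R_CompleteNormedModule _ (fun k => 4 * tele k)).
  2: { apply (ex_series_scal_l 4 tele), ex_tele. }
  intro k. change (Rabs ((1 + INR (S k)) / (y + INR (S k)) ^ m) <= 4 * tele k).
  rewrite Rabs_pos_eq by (apply Rlt_le, term_pos; lra).
  rewrite S_INR. unfold tele.
  assert (Hk : 0 <= INR k) by apply pos_INR.
  set (t := INR k + 1).
  assert (Ht : 1 <= t) by (unfold t; lra).
  replace (1 + (INR k + 1)) with (1 + t) by (unfold t; ring).
  replace (INR k + 2) with (t + 1) by (unfold t; ring).
  replace (y + (INR k + 1)) with (y + t) by (unfold t; ring).
  assert (H1 : t ^ 3 <= (y + t) ^ m).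
  { apply Rle_trans with (t ^ m). apply Rle_pow; auto.
    apply pow_incr; lra. }
  assert (H3 : 0 < t ^ 3) by (apply pow_lt; lra).
  apply Rle_trans with ((1 + t) / t ^ 3).
  { unfold Rdiv. apply Rmult_le_compat_l; [lra|].
    apply Rinv_le_contravar; auto. }
  replace (4 * (/ t - / (t + 1))) with (4 / (t * (t + 1))) by (field; lra).
  apply Rle_trans with (4 / (t * (t+1))); [|lra].
  simpl. unfold Rdiv.
  apply (Rmult_le_reg_r (t * (t * (t * 1)) * (t * (t+1)))).
  { apply Rmult_lt_0_compat; [simpl in H3; lra| nra]. }
  field_simplify; try nra.
Qed.

Lemma term_cs y m k : 0 < y ->
  ((1 + INR k) / ((y + 1) + INR k) ^ m) ^ 2 <=
  ((1 + INR k) / (y + INR k) ^ m) * ((1 + INR k) / ((y + 2) + INR k) ^ m).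
Proof.
  intros Hy. assert (Hk : 0 <= INR k) by apply pos_INR.
  set (u := 1 + INR k). set (p := y + INR k).
  replace (y + 1 + INR k) with (p + 1) by (unfold p; ring).
  replace (y + 2 + INR k) with (p + 2) by (unfold p; ring).
  assert (Hp : 0 < p) by (unfold p; lra).
  assert (Hu : 0 < u) by (unfold u; lra).
  assert (H0 : 0 < p ^ m) by (apply pow_lt; lra).
  assert (H1 : 0 < (p+1) ^ m) by (apply pow_lt; lra).
  assert (H2 : 0 < (p+2) ^ m) by (apply pow_lt; lra).
  assert (Hm : p ^ m * (p + 2) ^ m <= (p + 1) ^ m * (p + 1) ^ m).
  { rewrite <- !Rpow_mult_distr. apply pow_incr. nra. }
  replace (((u / (p + 1) ^ m)) ^ 2) with (u * u / ((p + 1) ^ m * (p + 1) ^ m)) by (field; lra).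
  replace (u / p ^ m * (u / (p + 2) ^ m)) with (u * u / (p ^ m * (p + 2) ^ m)) by (field; lra).
  unfold Rdiv. apply Rmult_le_compat_l; [nra|].
  apply Rinv_le_contravar; [nra|exact Hm].
Qed.

Lemma quad a b c t : 0 < a -> b ^ 2 <= a * c -> 0 <= t * t * a - 2 * t * b + c.
Proof.
  intros Ha Hb.
  assert (E : a * (t * t * a - 2 * t * b + c) = (t * a - b) ^ 2 + (a * c - b ^ 2)) by ring.
  assert (0 <= a * (t * t * a - 2 * t * b + c)) by (rewrite E; pose proof (pow2_ge_0 (t*a-b)); lra).
  destruct (Rle_or_lt 0 (t * t * a - 2 * t * b + c)); auto. nra.
Qed.

Lemma Series_nonneg f : (forall n, 0 <= f n) -> ex_series f -> 0 <= Series f.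
Proof.
  intros H He. apply Rle_trans with (Series (fun n => 0 * f n)).
  - rewrite Series_scal_l. lra.
  - apply Series_le; auto. intro n; specialize (H n); split; lra.
Qed.

Lemma Series_pos y m : 0 < y -> (3 <= m)%nat ->
  0 < Series (fun k => (1 + INR k) / (y + INR k) ^ m).
Proof.
  intros Hy Hm. rewrite Series_incr_1 by (apply ex_S; auto).
  assert (0 < (1 + INR 0) / (y + INR 0) ^ m) by (apply term_pos; auto).
  assert (0 <= Series (fun k => (1 + INR (S k)) / (y + INR (S k)) ^ m)).
  { apply Series_nonneg. intro k. apply Rlt_le, term_pos; auto.
    apply ex_series_incr_1 with (a := fun k => (1 + INR k) / (y + INR k) ^ m), ex_S; auto. }
  lra.
Qed.

Lemma main_ineq y m : 0 < y -> (3 <= m)%nat ->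
  (Series (fun k => (1 + INR k) / ((y + 1) + INR k) ^ m)) ^ 2 <=
  Series (fun k => (1 + INR k) / (y + INR k) ^ m) *
  Series (fun k => (1 + INR k) / ((y + 2) + INR k) ^ m).
Proof.
  intros Hy Hm.
  set (a := fun k => (1 + INR k) / (y + INR k) ^ m).
  set (b := fun k => (1 + INR k) / ((y + 1) + INR k) ^ m).
  set (c := fun k => (1 + INR k) / ((y + 2) + INR k) ^ m).
  assert (Ha : is_series a (Series a)) by (apply Series_correct, ex_S; auto).
  assert (Hb : is_series b (Series b)) by (apply Series_correct, ex_S; auto; lra).
  assert (Hc : is_series c (Series c)) by (apply Series_correct, ex_S; auto; lra).
  assert (HA : 0 < Series a) by (apply Series_pos; auto).
  set (A := Series a) in *. set (B := Series b) in *. set (C := Series c) in *.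
  set (t := B / A).
  assert (Hq : is_series (fun k => t * t * a k - 2 * t * b k + c k) (t * t * A - 2 * t * B + C)).
  { apply (is_series_plus (fun k => t * t * a k - 2 * t * b k) c).
    apply (is_series_minus (fun k => t * t * a k) (fun k => 2 * t * b k)).
    apply (is_series_scal_l (t * t) a). exact Ha.
    apply (is_series_scal_l (2 * t) b). exact Hb.
    exact Hc. }
  assert (H0 : 0 <= t * t * A - 2 * t * B + C).
  { rewrite <- (is_series_unique _ _ Hq). apply Series_nonneg.
    - intro k. apply quad. apply term_pos; auto. apply term_cs; auto.
    - eexists; exact Hq. }
  unfold t in H0.
  replace (B / A * (B / A) * A - 2 * (B / A) * B + C) with ((A * C - B ^ 2) / A) in H0 by (field; lra).
  assert (0 <= A * C - B ^ 2).
  { destruct (Rle_or_lt 0 (A * C - B ^ 2)); auto.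
    exfalso. assert ((A * C - B ^ 2) / A < 0). { apply Rdiv_neg_pos; auto. } lra. }
  lra.
Qed.

Theorem corollary2p2 (n : nat) (x : R) :
  (2 <= n)%nat -> 0 < x ->
  (psi2 n (x + 1)) ^ 2 <= psi2 n x * psi2 n (x + 2).
Proof.
  intros Hn Hx. unfold psi2.
  set (K := (-1) ^ (n + 1) * INR (Factorial.fact n)).
  pose proof (main_ineq x (n + 1) Hx ltac:(lia)) as H.
  set (A := Series (fun k => (1 + INR k) / (x + INR k) ^ (n + 1))) in *.
  set (B := Series (fun k => (1 + INR k) / (x + 1 + INR k) ^ (n + 1))) in *.
  set (C := Series (fun k => (1 + INR k) / (x + 2 + INR k) ^ (n + 1))) in *.
  replace ((K * B) ^ 2) with (K ^ 2 * B ^ 2) by ring.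
  replace (K * A * (K * C)) with (K ^ 2 * (A * C)) by ring.
  apply Rmult_le_compat_l; auto. apply pow2_ge_0.
Qed.
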